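(* Let $X$ be a strongly $0$-dimensional $\sigma$-compact metrizable space. Then $\mathrm{SR}(X)$ is a $G_\delta$ subset of $(\mathrm{Met}(X),\mathcal{D}_X)$.
   Context: $\mathrm{Met}(X)$ denotes the set of all metrics on $X$ generating the topology of $X$, equipped with the supremum metric $\mathcal{D}_X(d,e)=\sup_{x,y\in X}|d(x,y)-e(x,y)|$ (values in $[0,\infty]$) and the topology generated by its open balls. A topological space is strongly $0$-dimensional if for every pair $A,B$ of disjoint closed subsets there is a clopen set $V$ with $A\subseteq V$, $V\cap B=\emptyset$. A metric $d$ is strongly rigid if $d(x,y)=d(u,v)\neq0$ implies $\{x,y\}=\{u,v\}$; $\mathrm{SR}(X)$ is the set of strongly rigid metrics in $\mathrm{Met}(X)$. A $G_\delta$ set is a countable intersection of open sets. *)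

(* Defs.v *)
From HB Require Import structures.
From mathcomp Require Import all_boot all_order all_algebra.
From mathcomp Require Import all_classical all_reals all_analysis.
From mathcomp Require Import Rstruct Rstruct_topology.
Unset Strict Implicit. Unset Printing Implicit Defensive.
Import Order.TTheory GRing.Theory Num.Theory.
Local Open Scope classical_set_scope.
Local Open Scope ring_scope.

Notation RR := Rdefinitions.R.

Definition is_metric {X : Type} (d : X -> X -> RR) : Prop :=
  [/\ (forall x y, 0 <= d x y),
      (forall x y, d x y = 0 <-> x = y),
      (forall x y, d x y = d y x) &
      (forall x y z, d x z <= d x y + d y z)].

Definition generates_topology {X : topologicalType} (d : X -> X -> RR) : Prop :=
  forall A : set X, open A <->
    (forall x, A x -> exists2 e : RR, 0 < e & [set y | d x y < e] `<=` A).

Definition Met (X : topologicalType) : set (X -> X -> RR) :=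
  [set d | is_metric d /\ generates_topology d].


Definition metrizable (X : topologicalType) : Prop := exists d, Met X d.

Definition DX {X : Type} (d e : X -> X -> RR) : \bar RR :=
  ereal_sup [set (`|d xy.1 xy.2 - e xy.1 xy.2|)%:E | xy in [set: X * X]].

(* open sets of (Met(X), D_X) in the topology generated by the open balls
   {e in Met X | D_X(d,e) < r}: U is open iff each point of U has a ball
   around it contained in U. *)
Definition Met_open (X : topologicalType) (U : set (X -> X -> RR)) : Prop :=
  U `<=` Met X /\
  forall d, U d -> exists2 r : RR, 0 < r &
    [set e | Met X e /\ (DX d e < r%:E)%E] `<=` U.

Definition Met_Gdelta (X : topologicalType) (S : set (X -> X -> RR)) : Prop :=
  exists U : nat -> set (X -> X -> RR),
    (forall n, Met_open X (U n)) /\ S = \bigcap_n U n.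

Definition strongly_rigid {X : Type} (d : X -> X -> RR) : Prop :=
  forall x y u v, d x y = d u v -> d x y <> 0 ->
    (x = u /\ y = v) \/ (x = v /\ y = u).

Definition SR (X : topologicalType) : set (X -> X -> RR) :=
  [set d | Met X d /\ strongly_rigid d].


Definition strongly_zero_dimensional (X : topologicalType) : Prop :=
  forall A B : set X, closed A -> closed B -> A `&` B = set0 ->
    exists V : set X, [/\ clopen V, A `<=` V & V `&` B = set0].

Definition sigma_compact (X : topologicalType) : Prop :=
  exists K : nat -> set X, (forall n, compact (K n)) /\ \bigcup_n K n = setT.

(* Main.v *)
Set Warnings "-all".
Require Import Defs.
From HB Require Import structures.
From mathcomp Require Import all_boot all_order all_algebra.
From mathcomp Require Import all_classical all_reals all_analysis.
From mathcomp Require Import Rstruct Rstruct_topology.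
From mathcomp Require Import lra.
Import Order.TTheory GRing.Theory Num.Theory.
Local Open Scope classical_set_scope.
Local Open Scope ring_scope.

Lemma ball_nbhs (X : topologicalType) (d : X -> X -> RR) :
  Met X d -> forall x (e : RR), 0 < e -> nbhs x [set y | d x y < e].
Proof.
move=> [[d0 d00 dsym dtri] gen] x e e0.
apply: open_nbhs_nbhs; split; last by rewrite /= (proj2 (d00 x x)).
apply/gen => y /= dxy; exists (e - d x y); first by rewrite subr_gt0.
move=> z /= dyz; have := dtri x y z; lra.
Qed.

Lemma dcomp_cont (X Y : topologicalType) (d : X -> X -> RR) (f1 f2 : Y -> X) :
  Met X d -> continuous f1 -> continuous f2 ->
  continuous (fun q => d (f1 q) (f2 q)).
Proof.
move=> Md c1 c2 q. rewrite /continuous_at. apply/(@cvgrPdist_lt RR RR^o) => eps eps0.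
have e2 : 0 < eps / 2 by rewrite divr_gt0.
have h1 := c1 q _ (@ball_nbhs _ _ Md (f1 q) _ e2).
have h2 := c2 q _ (@ball_nbhs _ _ Md (f2 q) _ e2).
near=> t.
have H1 : d (f1 q) (f1 t) < eps / 2 by near: t; exact: h1.
have H2 : d (f2 q) (f2 t) < eps / 2 by near: t; exact: h2.
case: Md => [[d0 d00 dsym dtri] _].
have t1 := dtri (f1 q) (f1 t) (f2 q).
have t2 := dtri (f1 t) (f2 q) (f2 t).
have t3 := dtri (f1 t) (f1 q) (f2 q).
have t4 := dtri (f1 q) (f2 q) (f2 t).
have t5 := dtri (f1 t) (f2 t) (f2 q). have s3 := dsym (f2 t) (f2 q).
have s1 := dsym (f1 t) (f1 q). have s2 := dsym (f2 q) (f2 t).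
rewrite ltr_distlC; apply/andP; split; lra.
Unshelve. all: end_near.
Qed.
Definition phi {X : Type} (d : X -> X -> RR) (c : RR) (p : (X*X)*(X*X)) : RR :=
 Num.max (Num.max `|d p.1.1 p.1.2 - d p.2.1 p.2.2| (c - d p.1.1 p.1.2))
   (Num.max (c - Num.max (d p.1.1 p.2.1) (d p.1.2 p.2.2))
            (c - Num.max (d p.1.1 p.2.2) (d p.1.2 p.2.1))).

Lemma c11 (X : topologicalType) : continuous (fun p : (X*X)*(X*X) => p.1.1).
Proof. move=> p; apply: cvg_comp; [exact: cvg_fst|exact: cvg_fst]. Qed.
Lemma c12 (X : topologicalType) : continuous (fun p : (X*X)*(X*X) => p.1.2).
Proof. move=> p; apply: cvg_comp; [exact: cvg_fst|exact: cvg_snd]. Qed.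
Lemma c21 (X : topologicalType) : continuous (fun p : (X*X)*(X*X) => p.2.1).
Proof. move=> p; apply: cvg_comp; [exact: cvg_snd|exact: cvg_fst]. Qed.
Lemma c22 (X : topologicalType) : continuous (fun p : (X*X)*(X*X) => p.2.2).
Proof. move=> p; apply: cvg_comp; [exact: cvg_snd|exact: cvg_snd]. Qed.

Lemma phi_cont (X : topologicalType) (d : X -> X -> RR) c :
  Met X d -> continuous (phi d c).
Proof.
move=> Md p.
have g := fun f1 f2 h1 h2 => @dcomp_cont X _ d f1 f2 Md h1 h2 p.
have g11 : (fun q : (X*X)*(X*X) => (d q.1.1 q.1.2 : RR^o)) @ p --> (d p.1.1 p.1.2 : RR^o) := g _ _ (@c11 X) (@c12 X).
have g22 : (fun q : (X*X)*(X*X) => (d q.2.1 q.2.2 : RR^o)) @ p --> (d p.2.1 p.2.2 : RR^o) := g _ _ (@c21 X) (@c22 X).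
have g13 : (fun q : (X*X)*(X*X) => (d q.1.1 q.2.1 : RR^o)) @ p --> (d p.1.1 p.2.1 : RR^o) := g _ _ (@c11 X) (@c21 X).
have g24 : (fun q : (X*X)*(X*X) => (d q.1.2 q.2.2 : RR^o)) @ p --> (d p.1.2 p.2.2 : RR^o) := g _ _ (@c12 X) (@c22 X).
have g14 : (fun q : (X*X)*(X*X) => (d q.1.1 q.2.2 : RR^o)) @ p --> (d p.1.1 p.2.2 : RR^o) := g _ _ (@c11 X) (@c22 X).
have g23 : (fun q : (X*X)*(X*X) => (d q.1.2 q.2.1 : RR^o)) @ p --> (d p.1.2 p.2.1 : RR^o) := g _ _ (@c12 X) (@c21 X).
have cc : (fun _ : (X*X)*(X*X) => (c : RR^o)) @ p --> (c : RR^o) by exact: cvg_cst.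
rewrite /phi.
apply: (@continuous_max _ _ (fun p => Num.max _ _) (fun p => Num.max _ _)).
- apply: (@continuous_max _ _ (fun p => `|_|) (fun p => _ - _)).
  + exact: (cvg_norm (cvgB g11 g22)).
  + exact: (cvgB cc g11).
- apply: (@continuous_max _ _ (fun p => _ - _) (fun p => _ - _)).
  + apply: cvgB => //; exact: (@continuous_max _ _ (fun p => _) (fun p => _)).
  + apply: cvgB => //; exact: (@continuous_max _ _ (fun p => _) (fun p => _)).
Qed.
Definition bad {X : Type} (d : X -> X -> RR) (c : RR) (p : (X*X)*(X*X)) : Prop :=
  [/\ d p.1.1 p.1.2 = d p.2.1 p.2.2, c <= d p.1.1 p.1.2,
      c <= Num.max (d p.1.1 p.2.1) (d p.1.2 p.2.2) &
      c <= Num.max (d p.1.1 p.2.2) (d p.1.2 p.2.1)].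

Lemma maxge (a b : RR) : a <= Num.max a b /\ b <= Num.max a b.
Proof. by rewrite !le_max !lexx orbT. Qed.

Lemma maxcase (a b c : RR) : c <= Num.max a b -> c <= a \/ c <= b.
Proof. by rewrite le_max => /orP. Qed.

Lemma phi_pos {X : Type} (d : X -> X -> RR) c p : ~ bad d c p -> 0 < phi d c p.
Proof.
move=> nb; rewrite ltNge; apply/negP => H; apply: nb.
move: H; rewrite /phi !ge_max => /andP [/andP [H1 H2] /andP [H3 H4]].
rewrite normr_le0 subr_eq0 in H1; move/eqP: H1 => H1.
split => //; rewrite -subr_le0 //.
Qed.

Lemma phi_stable {X : Type} (d e : X -> X -> RR) (c s : RR) p :
  (forall x y, `|d x y - e x y| < s) -> bad e c p -> phi d c p < s *+ 2.
Proof.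
move=> H [E1 E2 E3 E4].
have h := fun x y => (H x y); move: {H}h => H.
have D : forall x y, e x y - s < d x y /\ d x y < e x y + s.
  by move=> x y; have := H x y; rewrite ltr_norml => /andP [? ?]; split; lra.
have s0 : 0 < s := le_lt_trans (normr_ge0 _) (H p.1.1 p.1.1).
rewrite /phi !gt_max.
have [a1 a2] := D p.1.1 p.1.2. have [b1 b2] := D p.2.1 p.2.2.
apply/andP; split; first (apply/andP; split).
- rewrite ltr_norml; apply/andP; split; lra.
- lra.
- apply/andP; split.
  + have [m1 m2] := maxge (d p.1.1 p.2.1) (d p.1.2 p.2.2).
    have [u1 u2] := D p.1.1 p.2.1. have [v1 v2] := D p.1.2 p.2.2.
    case: (maxcase _ _ _ E3) => ?; lra.
  + have [m1 m2] := maxge (d p.1.1 p.2.2) (d p.1.2 p.2.1).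
    have [u1 u2] := D p.1.1 p.2.2. have [v1 v2] := D p.1.2 p.2.1.
    case: (maxcase _ _ _ E4) => ?; lra.
Qed.

Lemma phi_eps (X : topologicalType) (d : X -> X -> RR) c (A : set ((X*X)*(X*X))) :
  Met X d -> compact A -> (forall p, A p -> ~ bad d c p) ->
  exists2 eps : RR, 0 < eps & forall p, A p -> eps <= phi d c p.
Proof.
move=> Md cA nb.
have cS : compact (phi d c @` A).
  by apply: continuous_compact => //; apply: continuous_subspaceT; exact: phi_cont.
have clS : closed (phi d c @` A) by apply: compact_closed => //; exact: Rhausdorff.
have nS0 : ~ (phi d c @` A) 0.
  by case=> p Ap E; have := @phi_pos _ d c p (nb p Ap); rewrite E ltxx.
have : ~ closure (phi d c @` A) 0 by move=> /clS.
move=> /existsNP [B] /not_implyP [nB] /set0P /negP; rewrite negbK => /eqP SB.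
have [e e0 eB] := (proj1 (nbhs_ballP _ _) nB).
exists e => // p Ap; rewrite leNgt; apply/negP => lt.
have : (phi d c @` A `&` B) (phi d c p).
  split; first by exists p.
  apply: eB; rewrite /ball /= sub0r normrN ger0_norm //.
  exact/ltW/(@phi_pos _ d c p)/nb.
by rewrite SB.
Qed.
Definition Lset {X : Type} (K : nat -> set X) (n : nat) : set X :=
  [set x | exists i, (i <= n)%N /\ K i x].

Lemma Lset_compact (X : topologicalType) (K : nat -> set X) :
  (forall n, compact (K n)) -> forall n, compact (Lset K n).
Proof.
move=> cK; elim=> [|n IH].
  suff -> : Lset K 0 = K 0 by [].
  apply/seteqP; split => x /=; first by case=> i []; rewrite leqn0 => /eqP ->.
  by move=> Kx; exists 0%N.
suff -> : Lset K n.+1 = Lset K n `|` K n.+1 by apply: compactU.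
apply/seteqP; split => x /=.
  case=> i []; rewrite leq_eqVlt => /orP [/eqP -> ?|Hi Ki]; first by right.
  by left; exists i.
case=> [[i [Hi Ki]]|Kx]; last by exists n.+1.
by exists i; split => //; apply: leqW.
Qed.

Lemma Lset_mono {X : Type} (K : nat -> set X) n m :
  (n <= m)%N -> Lset K n `<=` Lset K m.
Proof. by move=> nm x [i [Hi Ki]]; exists i; split => //; apply: leq_trans nm. Qed.

Lemma DX_ub {X : Type} (d e : X -> X -> RR) x y :
  ((`|d x y - e x y|)%:E <= DX d e)%E.
Proof. by apply: ereal_sup_ubound; exists (x, y). Qed.

Theorem proposition5p3 (X : topologicalType) :
  strongly_zero_dimensional X -> sigma_compact X -> metrizable X ->
  Met_Gdelta X (SR X).
Proof.
move=> _ [K [cK KT]] _.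
pose A n : set ((X*X)*(X*X)) := (Lset K n `*` Lset K n) `*` (Lset K n `*` Lset K n).
have cA : forall n, compact (A n).
  by move=> n; apply: compact_setX; apply: compact_setX; apply: Lset_compact.
pose c (n : nat) : RR := (n.+1%:R)^-1.
have c0 : forall n, 0 < c n by move=> n; rewrite invr_gt0 ltr0Sn.
exists (fun n => [set d | Met X d /\ forall p, A n p -> ~ bad d (c n) p]).
split.
  move=> n; split; first by move=> d [].
  move=> d [Md nb].
  have [eps e0 He] := @phi_eps X d (c n) (A n) Md (cA n) nb.
  exists (eps / 2); first by rewrite divr_gt0.
  move=> e [Me De]; split => // p Ap be.
  have Hde : forall x y, `|d x y - e x y| < eps / 2.
    move=> x y; rewrite -lte_fin; exact: le_lt_trans (DX_ub d e x y) De.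
  have := @phi_stable _ d e (c n) (eps / 2) p Hde be; have := He p Ap.
  move: (phi d (c n) p) => r; lra.
apply/seteqP; split.
  move=> d [Md rig] n _; split => // -[[x y] [u v]] _ [/= E1 E2 E3 E4].
  case: Md => [[d0 d00 dsym dtri] _].
  have := c0 n => cn.
  have nz : d x y <> 0 by move=> h; rewrite h in E2; have := lt_le_trans cn E2; rewrite ltxx.
  have h1 := proj2 (d00 x x) erefl; have h2 := proj2 (d00 y y) erefl.
  case: (rig x y u v E1 nz) => -[k1 k2].
    rewrite -k1 -k2 h1 h2 /= maxxx in E3; by have := lt_le_trans cn E3; rewrite ltxx.
  rewrite -k1 -k2 h1 h2 /= maxxx in E4; by have := lt_le_trans cn E4; rewrite ltxx.
move=> d HU.
have Md : Met X d by case: (HU 0%N I).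
split => // x y u v E nz.
apply: contrapT => nr.
case: (Md) => [[d0 d00 dsym dtri] _].
have m1 : 0 < Num.max (d x u) (d y v).
  rewrite lt_max; apply/orP; rewrite !lt_def !d0 !andbT.
  case: (boolP (d x u != 0)) => [H|]; first by left.
  rewrite negbK => /eqP /d00 xu; right; apply/negP => /eqP /d00 yv.
  by apply: nr; left.
have m2 : 0 < Num.max (d x v) (d y u).
  rewrite lt_max; apply/orP; rewrite !lt_def !d0 !andbT.
  case: (boolP (d x v != 0)) => [H|]; first by left.
  rewrite negbK => /eqP /d00 xv; right; apply/negP => /eqP /d00 yu.
  by apply: nr; right.
have m0 : 0 < d x y by rewrite lt_def d0 andbT; apply/eqP.
pose m := Num.min (d x y) (Num.min (Num.max (d x u) (d y v)) (Num.max (d x v) (d y u))).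
have mpos : 0 < m by rewrite !lt_min m0 m1 m2.
have [k Hk] := ltr_add_invr mpos; rewrite add0r in Hk.
have inK : forall z : X, exists i, K i z.
  move=> z; have : [set: X] z by [].
  by rewrite -KT => -[i _ Kz]; exists i.
have [ix Kx] := inK x; have [iy Ky] := inK y.
have [iu Ku] := inK u; have [iv Kv] := inK v.
pose n := maxn k (maxn (maxn ix iy) (maxn iu iv)).
have Ln : forall i z, (i <= n)%N -> K i z -> Lset K n z.
  by move=> i z Hi Kz; exists i.
have [_ /(_ ((x, y), (u, v)))] := HU n I; apply.
  split; split; [apply: (Ln ix x _ Kx)|apply: (Ln iy y _ Ky)|apply: (Ln iu u _ Ku)|apply: (Ln iv v _ Kv)];
    by rewrite /n !leq_max leqnn ?orbT.
have cn : c n <= m.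
  apply: le_trans (ltW Hk); rewrite /c lef_pV2 ?posrE ?ltr0Sn // ler_nat ltnS.
  by rewrite leq_max leqnn.
have : m <= d x y by rewrite ge_min lexx.
have : m <= Num.max (d x u) (d y v) by rewrite !ge_min lexx orbT.
have : m <= Num.max (d x v) (d y u) by rewrite !ge_min lexx !orbT.
move=> h1 h2 h3; split => /=; [exact: E|exact: le_trans cn _|exact: le_trans cn _|exact: le_trans cn _].
Qed.
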